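(* Let $\pi$ be a representation of $\mathcal A_\alpha$ on a Hilbert space of finite dimension $n$. (i) $\Lambda_{T(\pi)}=2-\Lambda_\pi$. (ii) Let $\alpha>0$, $\alpha\ne1$. (a) If $\operatorname{rk}\pi(x_1)+\operatorname{rk}\pi(x_2)>n=\operatorname{rk}\pi(x_3)+\operatorname{rk}\pi(x_4)$, then $\Lambda_{S(\pi)}=\{0\}\cup\big(\frac{\alpha}{\alpha-1}-\frac1{\alpha-1}\Lambda_\pi\big)$. (b) If $\operatorname{rk}\pi(x_3)+\operatorname{rk}\pi(x_4)>n=\operatorname{rk}\pi(x_1)+\operatorname{rk}\pi(x_2)$, then $\Lambda_{S(\pi)}=\{\frac{\alpha}{\alpha-1}\}\cup\big(\frac{\alpha}{\alpha-1}-\frac1{\alpha-1}\Lambda_\pi\big)$. (iii) Let $\alpha\in(0,3)$. (a) If $\operatorname{rk}\pi(x_1)+\operatorname{rk}\pi(x_2)<n=\operatorname{rk}\pi(x_3)+\operatorname{rk}\pi(x_4)$, then $\Lambda_{\Phi^+(\pi)}=\{0\}\cup\big(1-\frac1{3-\alpha}+\frac1{3-\alpha}\Lambda_\pi\big)$. (b) If $\operatorname{rk}\pi(x_3)+\operatorname{rk}\pi(x_4)<n=\operatorname{rk}\pi(x_1)+\operatorname{rk}\pi(x_2)$, then $\Lambda_{\Phi^+(\pi)}=\{1+\frac1{3-\alpha}\}\cup\big(1-\frac1{3-\alpha}+\frac1{3-\alpha}\Lambda_\pi\big)$. (Here $c-d\Lambda=\{c-d\lambda:\lambda\in\Lambda\}$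 etc.)
   Context: For $\alpha\in\mathbb R$, a representation $\pi$ of $\mathcal A_\alpha$ (the universal C*-algebra generated by projections $x_1,\dots,x_4$ with $x_1+\dots+x_4=\alpha$) on a Hilbert space $\mathcal H$ is a quadruple $(\pi(x_1),\dots,\pi(x_4))$ of orthogonal projections on $\mathcal H$ with sum $\alpha I$. For finite-dimensional $\pi$, $\Lambda_\pi\subseteq[0,2]$ denotes the set of eigenvalues of $\pi(x_3)+\pi(x_4)$. Linear reflection: $T(\pi)$ is the representation of $\mathcal A_{4-\alpha}$ on $\mathcal H$ with $T(\pi)(x_i)=I-\pi(x_i)$. Hyperbolic reflection: for $\alpha>0$, $\alpha\neq1$ and $\pi$ on $\mathcal H$, let $\widehat{\mathcal H}=\bigoplus_{i=1}^4\operatorname{ran}\pi(x_i)$, let $w_i:\operatorname{ran}\pi(x_i)\to\widehat{\mathcal H}$ be the canonical injections, $u_i:\operatorname{ran}\pi(x_i)\to\mathcal H$ the inclusions, and $u=\frac1{\sqrt\alpha}(u_1^*,u_2^*,u_3^*,u_4^* )^{T}:\mathcal H\to\widehat{\mathcal H}$ (an isometry). Let $\mathcal K=\operatorname{ran}(I-uu^* )\subseteq\widehat{\mathcal H}$ with inclusion $v:\mathcal K\to\widehat{\mathcal H}$. Then $S(\pi)$ is the representation of $\mathcal A_{\alpha/(\alpha-1)}$ on $\mathcal K$ with $S(\pi)(x_i)=\frac{\alpha}{\alpha-1}v^*w_iw_i^*v$ (these are projections summing to $\frac\alpha{\alpha-1}I$). For $\alpha\in(0,3)$, $\Phi^+(\pi)=S(T(\pi))$,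 a representation of $\mathcal A_{1+\frac1{3-\alpha}}$. *)

(* Defs.v *)
(* Finite-dimensional Hilbert spaces are modelled concretely:
   an n-dimensional Hilbert space is C^n (row vectors 'rV[C]_n, MathComp's
   convention: operators act on the right, v *m A), over an arbitrary
   numeric algebraically closed field C (e.g. the complex numbers R[i]). *)
From HB Require Import structures.
From mathcomp Require Import all_boot all_order all_algebra.
Set Implicit Arguments. Unset Strict Implicit. Unset Printing Implicit Defensive.
Import Order.TTheory GRing.Theory Num.Theory.
Local Open Scope ring_scope.

Section Defs.
Variable C : numClosedFieldType.

Definition adjmx m k (A : 'M[C]_(m, k)) : 'M[C]_(k, m) :=
  (map_mx (fun z : C => z^*) A)^T.

Definition is_proj n (A : 'M[C]_n) : Prop := A *m A = A /\ adjmx A = A.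

(* generators x_1, ..., x_4 are indexed by 'I_4 : o1 = x_1, ..., o4 = x_4 *)
Definition o1 : 'I_4 := @Ordinal 4 0 erefl.
Definition o2 : 'I_4 := @Ordinal 4 1 erefl.
Definition o3 : 'I_4 := @Ordinal 4 2 erefl.
Definition o4 : 'I_4 := @Ordinal 4 3 erefl.

(* a representation of A_alpha on C^n: four orthogonal projections with
   sum alpha I, alpha real *)
Definition is_rep n (alpha : C) (P : 'I_4 -> 'M[C]_n) : Prop :=
  alpha \is Num.real /\ (forall i, is_proj (P i)) /\ \sum_(i < 4) P i = alpha%:M.

Definition Lambda n (P : 'I_4 -> 'M[C]_n) : C -> Prop :=
  fun l => eigenvalue (P o3 + P o4) l.

Definition Trep n (P : 'I_4 -> 'M[C]_n) : 'I_4 -> 'M[C]_n :=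
  fun i => 1%:M - P i.

(* Hyperbolic reflection.  hat H = ran P1 (+) ... (+) ran P4 is realised
   isometrically inside H^4 = C^(4n), indexed by 'I_4 * 'I_n (component i,
   coordinate k), as the range of the block diagonal projection
   diag(P1,...,P4).  The injection w_i w_i^adj becomes the projection onto the
   i-th component of hat H, i.e. the block matrix with P_i at (i,i);
   u h = alpha^(-1/2) (P1 h, ..., P4 h), so u u^adj has (i,j) block
   alpha^-1 P_i P_j, and K = ran (I - u u^adj) is the range of
   Kproj = diag(P1..P4) - u u^adj. *)
Definition bigdim n := #|{: 'I_4 * 'I_n }|.

Definition blk n (F : 'I_4 -> 'I_4 -> 'M[C]_n) : 'M[C]_(bigdim n) :=
  \matrix_(a, b)
    F (enum_val a).1 (enum_val b).1 (enum_val a).2 (enum_val b).2.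

Definition hatproj n (P : 'I_4 -> 'M[C]_n) : 'M[C]_(bigdim n) :=
  blk (fun i j => if i == j then P i else 0).

Definition uustar n (alpha : C) (P : 'I_4 -> 'M[C]_n) : 'M[C]_(bigdim n) :=
  blk (fun i j => alpha^-1 *: (P i *m P j)).

Definition Kproj n (alpha : C) (P : 'I_4 -> 'M[C]_n) : 'M[C]_(bigdim n) :=
  hatproj P - uustar alpha P.

Definition wwstar n (P : 'I_4 -> 'M[C]_n) (i0 : 'I_4) : 'M[C]_(bigdim n) :=
  blk (fun i j => if (i == i0) && (j == i0) then P i else 0).

(* S(pi)(x_i) = alpha/(alpha-1) v^adj w_i w_i^adj v, as an operator on C^(4n)
   whose restriction to K = ran Kproj is the operator of the paper *)
Definition Srep n (alpha : C) (P : 'I_4 -> 'M[C]_n) : 'I_4 -> 'M[C]_(bigdim n) :=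
  fun i => (alpha / (alpha - 1)) *:
             (Kproj alpha P *m wwstar P i *m Kproj alpha P).

Definition sub_eigenvalue N (V A : 'M[C]_N) : C -> Prop :=
  fun l => exists y : 'rV[C]_N, [/\ y != 0, y *m V = y & y *m A = l *: y].

Definition LambdaS n (alpha : C) (P : 'I_4 -> 'M[C]_n) : C -> Prop :=
  sub_eigenvalue (Kproj alpha P) (Srep alpha P o3 + Srep alpha P o4).

(* Phi^+(pi) = S(T(pi)), T(pi) a representation of A_(4 - alpha) *)
Definition LambdaPhiPlus n (alpha : C) (P : 'I_4 -> 'M[C]_n) : C -> Prop :=
  LambdaS (4 - alpha) (Trep P).

End Defs.

(* Main.v *)
Require Import Defs.
From HB Require Import structures.
From mathcomp Require Import all_boot all_order all_algebra.
From mathcomp Require Import ring zify.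
Import Order.TTheory GRing.Theory Num.Theory.
Local Open Scope ring_scope.
Section LA.
Variable C : numClosedFieldType.
Variable n : nat.
Variables P Q : 'M[C]_n.
Hypothesis hP : is_proj P.
Hypothesis hQ : is_proj Q.

Lemma in_range (R : 'M[C]_n) (v : 'rV_n) : R *m R = R -> (v <= R)%MS -> v *m R = v.
Proof. by move=> hR /submxP [D ->]; rewrite -mulmxA hR. Qed.

Lemma cap_vec : (\rank (P :&: Q)%MS > 0)%N ->
  exists2 v : 'rV[C]_n, v != 0 & v *m P = v /\ v *m Q = v.
Proof.
rewrite lt0n mxrank_eq0 => /rowV0Pn [v hv vnz]; exists v => //.
split; apply: in_range; [exact: hP.1 | | exact: hQ.1 |].
  exact: submx_trans hv (capmxSl _ _).
exact: submx_trans hv (capmxSr _ _).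
Qed.

Lemma vec_cap (v : 'rV[C]_n) : v != 0 -> v *m P = v -> v *m Q = v ->
  (\rank (P :&: Q)%MS > 0)%N.
Proof.
move=> vnz h1 h2; rewrite lt0n mxrank_eq0; apply/rowV0Pn; exists v => //.
by rewrite sub_capmx -{1}h1 -{2}h2 !submxMl.
Qed.

Lemma rank_sum_cap : (\rank (P + Q)%MS + \rank (P :&: Q)%MS = \rank P + \rank Q)%N.
Proof. exact: mxrank_sum_cap. Qed.

Lemma trP (R : 'M[C]_n) : is_proj R -> R^T = map_mx (fun z : C => z^*) R.
Proof. by case=> _ h; rewrite -{1}h /adjmx trmxK. Qed.

Lemma rank_row : \rank (row_mx P Q) = \rank (P + Q)%MS.
Proof.
rewrite -mxrank_tr tr_row_mx (@trP P hP) (@trP Q hQ).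
rewrite -(map_col_mx (Num.conj_op : {rmorphism C -> C})) mxrank_map.
by rewrite addsmxE.
Qed.

Lemma ker_vec : (\rank (P + Q)%MS < n)%N ->
  exists2 w : 'rV[C]_n, w != 0 & w *m P = 0 /\ w *m Q = 0.
Proof.
move=> h.
have : (\rank (kermx (row_mx P Q)) > 0)%N by rewrite mxrank_ker rank_row subn_gt0.
rewrite lt0n mxrank_eq0 => /rowV0Pn [w hw wnz]; exists w => //.
move/sub_kermxP: hw; rewrite mul_mx_row => /eqP; rewrite row_mx_eq0.
by case/andP => /eqP -> /eqP ->.
Qed.

Lemma vec_ker (w : 'rV[C]_n) : w != 0 -> w *m P = 0 -> w *m Q = 0 ->
  (\rank (P + Q)%MS < n)%N.
Proof.
move=> wnz h1 h2.
have : (w <= kermx (row_mx P Q))%MS by apply/sub_kermxP; rewrite mul_mx_row h1 h2 row_mx0.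
move=> hw; have : (\rank (kermx (row_mx P Q)) > 0)%N.
  by rewrite lt0n mxrank_eq0; apply/rowV0Pn; exists w.
by rewrite mxrank_ker rank_row subn_gt0.
Qed.

Lemma gt_cap : (n < \rank P + \rank Q)%N ->
  exists2 v : 'rV[C]_n, v != 0 & v *m P = v /\ v *m Q = v.
Proof.
move=> h; apply: cap_vec; have := rank_sum_cap; have := rank_leq_col (P + Q)%MS.
lia.
Qed.

Lemma cap_ker : (\rank P + \rank Q)%N = n ->
  forall v : 'rV[C]_n, v != 0 -> v *m P = v -> v *m Q = v ->
  exists2 w : 'rV[C]_n, w != 0 & w *m P = 0 /\ w *m Q = 0.
Proof.
move=> h v vnz h1 h2; apply: ker_vec.
have := vec_cap v vnz h1 h2; have := rank_sum_cap; lia.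
Qed.

Lemma zero_sum_cap : (\rank P + \rank Q)%N = n ->
  forall w : 'rV[C]_n, w != 0 -> w *m (P + Q) = 0 ->
  exists2 v : 'rV[C]_n, v != 0 & v *m P = v /\ v *m Q = v.
Proof.
move=> h w wnz; rewrite mulmxDr => e.
case: (eqVneq (w *m P) 0) => [h0|hnz].
  have h0' : w *m Q = 0 by rewrite h0 add0r in e.
  apply: cap_vec; have := vec_ker w wnz h0 h0'; have := rank_sum_cap; lia.
have hpq : w *m P = - (w *m Q) by apply/eqP; rewrite -addr_eq0 e.
exists (w *m P) => //; split; first by rewrite -mulmxA hP.1.
by rewrite [in LHS]hpq mulNmx -mulmxA hQ.1 -hpq.
Qed.
End LA.

Section S.
Variable C : numClosedFieldType.
Variable n : nat.
Definition comp (j : 'I_4) (y : 'rV[C]_(bigdim n)) : 'rV[C]_n :=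
  \row_k y 0 (enum_rank (j, k)).

Lemma comp_blk j y (F : 'I_4 -> 'I_4 -> 'M[C]_n) :
  comp j (y *m blk F) = \sum_i comp i y *m F i j.
Proof.
apply/rowP => k; rewrite !mxE summxE.
rewrite (reindex (@enum_rank _)) /=; last first.
  by exists enum_val => x _; rewrite ?enum_valK ?enum_rankK.
rewrite [RHS](eq_bigr (fun i => \sum_k' y 0 (enum_rank (i,k')) * F i j k' k)); last first.
  by move=> i _; rewrite !mxE; apply: eq_bigr => k' _; rewrite !mxE.
rewrite pair_bigA; apply: eq_bigr => [[i k']] _ /=.
by rewrite !mxE !enum_rankK.
Qed.

Lemma comp_inj y y' : (forall j, comp j y = comp j y') -> y = y'.
Proof.
move=> h; apply/rowP => a; rewrite -(enum_valK a).
case: (enum_val a) => j k.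
by move/rowP: (h j) => /(_ k); rewrite !mxE.
Qed.

Definition glue (f : 'I_4 -> 'rV[C]_n) : 'rV[C]_(bigdim n) :=
  \row_a f (enum_val a).1 0 (enum_val a).2.

Lemma comp_glue f j : comp j (glue f) = f j.
Proof. by apply/rowP => k; rewrite !mxE enum_rankK. Qed.

Lemma compD j y z : comp j (y + z) = comp j y + comp j z.
Proof. by apply/rowP => k; rewrite !mxE. Qed.
Lemma compB j y z : comp j (y - z) = comp j y - comp j z.
Proof. by apply/rowP => k; rewrite !mxE. Qed.
Lemma compZ j a y : comp j (a *: y) = a *: comp j y.
Proof. by apply/rowP => k; rewrite !mxE. Qed.
Lemma comp0 j : comp j 0 = 0.
Proof. by apply/rowP => k; rewrite !mxE. Qed.

Lemma comp_sum j I (r : seq I) (Q : pred I) (F : I -> 'rV[C]_(bigdim n)) :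
  comp j (\sum_(i <- r | Q i) F i) = \sum_(i <- r | Q i) comp j (F i).
Proof.
by apply/rowP => k; rewrite !mxE !summxE; apply: eq_bigr => i _; rewrite mxE.
Qed.

Lemma comp_eq0 y : (forall j, comp j y = 0) -> y = 0.
Proof. by move=> h; apply: comp_inj => j; rewrite h comp0. Qed.

Lemma ord4_cases (j : 'I_4) : [\/ j = o1, j = o2, j = o3 | j = o4].
Proof.
case: j => [[|[|[|[|m]]]] hm].
- by apply: Or41; apply: val_inj.
- by apply: Or42; apply: val_inj.
- by apply: Or43; apply: val_inj.
- by apply: Or44; apply: val_inj.
- by [].
Qed.

Lemma sum4 (V : zmodType) (F : 'I_4 -> V) :
  \sum_i F i = F o1 + F o2 + F o3 + F o4.
Proof.
rewrite !big_ord_recr big_ord0 /= add0r.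
by congr (F _ + F _ + F _ + F _); apply: val_inj.
Qed.

Variables (alpha : C) (P : 'I_4 -> 'M[C]_n).
Hypothesis hP : forall i, P i *m P i = P i.
Hypothesis hsum : \sum_i P i = alpha%:M.
Hypothesis ha0 : alpha != 0.
Hypothesis ha1 : alpha - 1 != 0.

Lemma comp_K j y : comp j (y *m Kproj alpha P) =
  comp j y *m P j - alpha^-1 *: ((\sum_i comp i y *m P i) *m P j).
Proof.
rewrite /Kproj mulmxBr compB /hatproj /uustar !comp_blk.
congr (_ - _).
  rewrite (bigD1 j) //= eqxx big1 ?addr0 // => i /negbTE.
  by rewrite eq_sym => ->; rewrite mulmx0.
rewrite mulmx_suml scaler_sumr; apply: eq_bigr => i _.
by rewrite -scalemxAr mulmxA.
Qed.

Lemma comp_W j k y : comp j (y *m wwstar P k) =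
  if j == k then comp k y *m P k else 0.
Proof.
rewrite /wwstar comp_blk; case: (boolP (j == k)) => [/eqP hjk|hjk].
  subst j.
  rewrite (bigD1 k) //= eqxx big1 ?addr0 // => i /negbTE ->.
  by rewrite mulmx0.
by rewrite big1 // => i _; rewrite andbF mulmx0.
Qed.

Definition inK y := (forall j, comp j y *m P j = comp j y) /\ \sum_j comp j y = 0.

Lemma sumP_scal (v : 'rV[C]_n) : \sum_j v *m P j = alpha *: v.
Proof. by rewrite -mulmx_sumr hsum mul_mx_scalar. Qed.

Lemma K_fix y : y *m Kproj alpha P = y <-> inK y.
Proof.
split.
  move=> hy.
  have h1 : forall j, comp j y *m P j = comp j y.
    move=> j; have e := congr1 (comp j) hy; rewrite comp_K in e.
    by rewrite -e mulmxBl -scalemxAl -!mulmxA !hP.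
  split => //.
  have -> : \sum_j comp j y = \sum_j comp j (y *m Kproj alpha P).
    by rewrite hy.
  under eq_bigr => j _ do rewrite comp_K.
  rewrite sumrB -scaler_sumr -mulmx_sumr hsum mul_mx_scalar scalerA mulVf //.
  by rewrite scale1r subrr.
case=> h1 h2; apply: comp_inj => j; rewrite comp_K h1.
rewrite (eq_bigr (fun i => comp i y)) ?h2 ?mul0mx ?scaler0 ?subr0 //.
Qed.

Lemma comp_S k j y : inK y -> comp j (y *m Srep alpha P k) =
  (alpha / (alpha - 1)) *: ((if j == k then comp k y else 0)
                            - alpha^-1 *: (comp k y *m P j)).
Proof.
move=> hK; have hy := (K_fix y).2 hK.
rewrite /Srep -scalemxAr compZ !mulmxA hy comp_K comp_W.
rewrite (eq_bigr (fun i => if i == k then comp k y else 0)); last first.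
  move=> i _; rewrite comp_W; case: (boolP (i == k)) => [/eqP ->|_].
    by rewrite !hK.1.
  by rewrite mul0mx.
rewrite (bigD1 k) //= eqxx big1 => [|i /negbTE -> //]; rewrite addr0.
by case: (boolP (j == k)) => [/eqP ->|_]; rewrite ?hK.1 ?mul0mx.
Qed.

Definition S34 := Srep alpha P o3 + Srep alpha P o4.

Lemma S34_comps y : inK y ->
  let c := alpha / (alpha - 1) in let d := (alpha - 1)^-1 in
  let t := comp o3 y + comp o4 y in
  [/\ comp o1 (y *m S34) = - (d *: (t *m P o1)),
      comp o2 (y *m S34) = - (d *: (t *m P o2)),
      comp o3 (y *m S34) = c *: comp o3 y - d *: (t *m P o3) &
      comp o4 (y *m S34) = c *: comp o4 y - d *: (t *m P o4)].
Proof.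
move=> hK c d t.
have hcd : c * alpha^-1 = d by rewrite /c /d; field; rewrite ha0 ha1.
rewrite /S34; split; rewrite mulmxDr compD !comp_S //= !scalerBr !scalerA hcd
  /t mulmxDl scalerDr ?scaler0 ?sub0r ?add0r -?opprD //.
all: try (by rewrite addr0).
  by rewrite opprD addrA.
by rewrite opprD [LHS]addrCA.
Qed.

Lemma allz y : comp o1 y = 0 -> comp o2 y = 0 -> comp o3 y = 0 -> comp o4 y = 0 ->
  y = 0.
Proof.
by move=> h1 h2 h3 h4; apply: comp_eq0 => j; case: (ord4_cases j) => ->.
Qed.

Lemma auxF (a b p q : 'rV[C]_n) (al l : C) : al - 1 != 0 ->
  l *: a = (al / (al - 1)) *: a - (al - 1)^-1 *: p ->
  l *: b = (al / (al - 1)) *: b - (al - 1)^-1 *: q ->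
  p + q = (al - l * (al - 1)) *: (a + b).
Proof.
move=> h1 /rowP e3 /rowP e4; apply/rowP => k; move: (e3 k) (e4 k).
rewrite !mxE => {}e3 {}e4.
have hp : p 0 k = (al - 1) * (al / (al - 1) * a 0 k - l * a 0 k).
  by rewrite e3; field.
have hq : q 0 k = (al - 1) * (al / (al - 1) * b 0 k - l * b 0 k).
  by rewrite e4; field.
by rewrite hp hq; field.
Qed.

Lemma core_fwd (y1 y2 y3 y4 : 'rV[C]_n) l :
  ~ [/\ y1 = 0, y2 = 0, y3 = 0 & y4 = 0] ->
  y1 *m P o1 = y1 -> y2 *m P o2 = y2 -> y3 *m P o3 = y3 -> y4 *m P o4 = y4 ->
  y1 + y2 + y3 + y4 = 0 ->
  l *: y1 = - ((alpha - 1)^-1 *: ((y3 + y4) *m P o1)) ->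
  l *: y2 = - ((alpha - 1)^-1 *: ((y3 + y4) *m P o2)) ->
  l *: y3 = (alpha / (alpha - 1)) *: y3 - (alpha - 1)^-1 *: ((y3 + y4) *m P o3) ->
  l *: y4 = (alpha / (alpha - 1)) *: y4 - (alpha - 1)^-1 *: ((y3 + y4) *m P o4) ->
  (exists2 m, Lambda P m & l = alpha / (alpha - 1) - (alpha - 1)^-1 * m)
  \/ (l = 0 /\ exists2 v : 'rV[C]_n, v != 0 & v *m P o1 = v /\ v *m P o2 = v)
  \/ (l = alpha / (alpha - 1) /\
       exists2 v : 'rV[C]_n, v != 0 & v *m P o3 = v /\ v *m P o4 = v).
Proof.
move=> hnz i1 i2 i3 i4 hs E1 E2 E3 E4.
have hc0 : alpha / (alpha - 1) != 0 by rewrite mulf_neq0 ?invr_neq0.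
case: (eqVneq (y3 + y4) 0) => [t0|tnz].
  rewrite t0 !mul0mx !scaler0 ?oppr0 ?subr0 ?addr0 in E1.
  rewrite t0 !mul0mx !scaler0 ?oppr0 ?subr0 ?addr0 in E2.
  rewrite t0 !mul0mx !scaler0 ?oppr0 ?subr0 ?addr0 in E3.
  rewrite t0 !mul0mx !scaler0 ?oppr0 ?subr0 ?addr0 in E4.
  have y4e : y4 = - y3 by apply/eqP; rewrite -addr_eq0 addrC t0.
  case: (eqVneq l 0) => [l0|lnz].
    right; left; split => //.
    move: E3; rewrite l0 scale0r => /esym/eqP; rewrite scaler_eq0 (negbTE hc0) /=.
    move=> /eqP y30.
    have y40 : y4 = 0 by rewrite y4e y30 oppr0.
    rewrite y30 y40 !addr0 in hs.
    have y2e : y2 = - y1 by apply/eqP; rewrite -addr_eq0 addrC hs.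
    exists y1.
      apply/eqP => y10; apply: hnz; split => //.
      by rewrite y2e y10 oppr0.
    have y1e : y1 = - y2 by rewrite y2e opprK.
    by split => //; rewrite [in LHS]y1e mulNmx i2 -y1e.
  right; right.
  have y10 : y1 = 0.
    by move: E1 => /eqP; rewrite scaler_eq0 (negbTE lnz) => /eqP.
  have y20 : y2 = 0.
    by move: E2 => /eqP; rewrite scaler_eq0 (negbTE lnz) => /eqP.
  have y3nz : y3 != 0.
    apply/eqP => y30; apply: hnz; split => //.
    by rewrite y4e y30 oppr0.
  split.
    move: E3 => /eqP; rewrite -subr_eq0 -scalerBl scaler_eq0 (negbTE y3nz) orbF.
    by rewrite subr_eq0 => /eqP.
  have y3e : y3 = - y4 by rewrite y4e opprK.
  by exists y3 => //; split => //; rewrite [in LHS]y3e mulNmx i4 -y3e.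
left; exists (alpha - l * (alpha - 1)); last by field; rewrite ha1.
apply/eigenvalueP; exists (y3 + y4) => //.
rewrite mulmxDr; exact: auxF ha1 E3 E4.
Qed.

Lemma LS_forward l : LambdaS alpha P l ->
  (exists2 m, Lambda P m & l = alpha / (alpha - 1) - (alpha - 1)^-1 * m)
  \/ (l = 0 /\ exists2 v : 'rV[C]_n, v != 0 & v *m P o1 = v /\ v *m P o2 = v)
  \/ (l = alpha / (alpha - 1) /\
       exists2 v : 'rV[C]_n, v != 0 & v *m P o3 = v /\ v *m P o4 = v).
Proof.
case=> y [ynz yK hyl].
have hK := (K_fix y).1 yK.
move: (S34_comps y hK) => /= [E1 E2 E3 E4].
have hyl' : y *m S34 = l *: y := hyl.
rewrite hyl' compZ in E1; rewrite hyl' compZ in E2.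
rewrite hyl' compZ in E3; rewrite hyl' compZ in E4.
have hs := hK.2; rewrite (@sum4 _ (fun j => comp j y)) in hs.
apply: (@core_fwd _ _ _ _ l _ (hK.1 o1) (hK.1 o2) (hK.1 o3) (hK.1 o4) hs E1 E2 E3 E4).
by case=> h1 h2 h3 h4; move/eqP: ynz; apply; apply: allz.
Qed.

Lemma core_bwd (y1 y2 y3 y4 : 'rV[C]_n) l :
  [\/ y1 != 0, y2 != 0, y3 != 0 | y4 != 0] ->
  y1 *m P o1 = y1 -> y2 *m P o2 = y2 -> y3 *m P o3 = y3 -> y4 *m P o4 = y4 ->
  y1 + y2 + y3 + y4 = 0 ->
  l *: y1 = - ((alpha - 1)^-1 *: ((y3 + y4) *m P o1)) ->
  l *: y2 = - ((alpha - 1)^-1 *: ((y3 + y4) *m P o2)) ->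
  l *: y3 = (alpha / (alpha - 1)) *: y3 - (alpha - 1)^-1 *: ((y3 + y4) *m P o3) ->
  l *: y4 = (alpha / (alpha - 1)) *: y4 - (alpha - 1)^-1 *: ((y3 + y4) *m P o4) ->
  LambdaS alpha P l.
Proof.
move=> hnz i1 i2 i3 i4 hs E1 E2 E3 E4.
pose f (j : 'I_4) := if j == o1 then y1 else if j == o2 then y2
                     else if j == o3 then y3 else y4.
pose y := glue f.
have c1 : comp o1 y = y1 by rewrite comp_glue.
have c2 : comp o2 y = y2 by rewrite comp_glue.
have c3 : comp o3 y = y3 by rewrite comp_glue.
have c4 : comp o4 y = y4 by rewrite comp_glue.
have hK : inK y.
  split; last by rewrite (@sum4 _ (fun j => comp j y)) c1 c2 c3 c4.
  by move=> j; case: (ord4_cases j) => ->; rewrite ?c1 ?c2 ?c3 ?c4.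
exists y; split.
- apply/eqP => y0; move: hnz; rewrite -c1 -c2 -c3 -c4 y0 !comp0 eqxx.
  by case.
- exact: (K_fix y).2 hK.
- change (y *m S34 = l *: y); apply: comp_inj => j.
  move: (S34_comps y hK) => /= [F1 F2 F3 F4].
  by case: (ord4_cases j) => ->; rewrite ?F1 ?F2 ?F3 ?F4 compZ ?c1 ?c2 ?c3 ?c4.
Qed.

Lemma B1 (v : 'rV[C]_n) : v != 0 -> v *m P o1 = v -> v *m P o2 = v ->
  LambdaS alpha P 0.
Proof.
move=> vnz h1 h2.
apply: (@core_bwd v (- v) 0 0 0);
  rewrite ?(addr0, add0r, mul0mx, scaler0, scale0r, oppr0, subr0, subrr, mulNmx, h1, h2) //.
by apply: Or41.
Qed.

Lemma B2 (v : 'rV[C]_n) : v != 0 -> v *m P o3 = v -> v *m P o4 = v ->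
  LambdaS alpha P (alpha / (alpha - 1)).
Proof.
move=> vnz h3 h4.
apply: (@core_bwd 0 0 v (- v));
  rewrite ?(addr0, add0r, mul0mx, scaler0, scale0r, oppr0, subr0, subrr, mulNmx, h3, h4) //.
by apply: Or43.
Qed.

Lemma B3 (t : 'rV[C]_n) m : t != 0 -> t *m (P o3 + P o4) = m *: t -> m != 0 ->
  alpha / (alpha - 1) - (alpha - 1)^-1 * m != 0 ->
  LambdaS alpha P (alpha / (alpha - 1) - (alpha - 1)^-1 * m).
Proof.
move=> tnz htm mnz lnz.
have amz : alpha - m != 0.
  apply: contra_neq lnz => h.
  have -> : m = alpha by apply/eqP; rewrite eq_sym -subr_eq0 h.
  by field; rewrite ha1.
set l := alpha / (alpha - 1) - (alpha - 1)^-1 * m.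
set d := (alpha - 1)^-1.
have hl : l = alpha / (alpha - 1) - d * m by [].
pose y1 := - ((d / l) *: (t *m P o1)).
pose y2 := - ((d / l) *: (t *m P o2)).
pose y3 := m^-1 *: (t *m P o3).
pose y4 := m^-1 *: (t *m P o4).
have ht : y3 + y4 = t.
  by rewrite /y3 /y4 -scalerDr -mulmxDr htm scalerA mulVf // scale1r.
have h12 : t *m P o1 + t *m P o2 = (alpha - m) *: t.
  rewrite scalerBl -(sumP_scal t) (@sum4 _ (fun j => t *m P j)) -htm mulmxDr.
  by rewrite -[_ + _ + _ + _]addrA addrK.
apply: (@core_bwd y1 y2 y3 y4 l); rewrite ?ht.
- case: (eqVneq y3 0) => [y30|y3nz]; last by apply: Or43.
  by apply: Or44; apply: contra_neq tnz => y40; rewrite -ht y30 y40 addr0.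
- by rewrite /y1 mulNmx -scalemxAl -mulmxA hP.
- by rewrite /y2 mulNmx -scalemxAl -mulmxA hP.
- by rewrite /y3 -scalemxAl -mulmxA hP.
- by rewrite /y4 -scalemxAl -mulmxA hP.
- rewrite -addrA ht /y1 /y2 -opprD -scalerDr h12 scalerA.
  rewrite (_ : d / l * (alpha - m) = 1) ?scale1r ?addNr //.
  by rewrite /l /d; field; rewrite ?ha1 ?mnz ?amz.
- by rewrite /y1 scalerN scalerA; congr (- (_ *: _)); rewrite /l /d; field; rewrite ?ha1 ?mnz ?amz.
- by rewrite /y2 scalerN scalerA; congr (- (_ *: _)); rewrite /l /d; field; rewrite ?ha1 ?mnz ?amz.
- by rewrite /y3 !scalerA -scalerBl; congr (_ *: _); rewrite /l /d; field; rewrite ?ha1 ?mnz ?amz.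
- by rewrite /y4 !scalerA -scalerBl; congr (_ *: _); rewrite /l /d; field; rewrite ?ha1 ?mnz ?amz.
Qed.

Hypothesis hproj : forall i, is_proj (P i).

Lemma sum12 (w : 'rV[C]_n) :
  w *m P o1 + w *m P o2 = alpha *: w - w *m (P o3 + P o4).
Proof.
rewrite -(sumP_scal w) (@sum4 _ (fun j => w *m P j)) mulmxDr.
by rewrite -[_ + _ + _ + _]addrA addrK.
Qed.

Lemma partA : (n < \rank (P o1) + \rank (P o2))%N ->
  n = (\rank (P o3) + \rank (P o4))%N ->
  forall l, LambdaS alpha P l <->
   (l = 0 \/ exists2 m, Lambda P m & l = alpha / (alpha - 1) - (alpha - 1)^-1 * m).
Proof.
move=> h12 h34 l; split.
  move/LS_forward => [[m hm ->]|[[-> _]|[-> [v vnz [h3 h4]]]]].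
  - by right; exists m.
  - by left.
  - right; exists 0; last by rewrite mulr0 subr0.
    have [w wnz [w3 w4]] :=
      @cap_ker _ _ _ _ (hproj o3) (hproj o4) (esym h34) v vnz h3 h4.
    by apply/eigenvalueP; exists w => //; rewrite mulmxDr w3 w4 addr0 scale0r.
have [v1 v1nz [h1 h2]] := @gt_cap _ _ _ _ (hproj o1) (hproj o2) h12.
case=> [->|[m hm ->]]; first exact: (B1 v1 v1nz h1 h2).
move/eigenvalueP: (hm) => [t ht tnz].
case: (eqVneq m 0) => [m0|mnz].
  rewrite m0 mulr0 subr0.
  have e : t *m (P o3 + P o4) = 0 by rewrite ht m0 scale0r.
  have [v vnz [h3 h4]] :=
    @zero_sum_cap _ _ _ _ (hproj o3) (hproj o4) (esym h34) t tnz e.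
  exact: (B2 v vnz h3 h4).
case: (eqVneq (alpha / (alpha - 1) - (alpha - 1)^-1 * m) 0) => [->|lnz].
  exact: (B1 v1 v1nz h1 h2).
exact: (B3 t m tnz ht mnz lnz).
Qed.

Lemma partB : (n < \rank (P o3) + \rank (P o4))%N ->
  n = (\rank (P o1) + \rank (P o2))%N ->
  forall l, LambdaS alpha P l <->
   (l = alpha / (alpha - 1) \/
    exists2 m, Lambda P m & l = alpha / (alpha - 1) - (alpha - 1)^-1 * m).
Proof.
move=> h34 h12 l; split.
  move/LS_forward => [[m hm ->]|[[-> [v vnz [h1 h2]]]|[-> _]]].
  - by right; exists m.
  - right; exists alpha; last by field; rewrite ha1.
    have [w wnz [w1 w2]] :=
      @cap_ker _ _ _ _ (hproj o1) (hproj o2) (esym h12) v vnz h1 h2.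
    apply/eigenvalueP; exists w => //.
    have := sum12 w; rewrite w1 w2 addr0 => /eqP; rewrite eq_sym subr_eq0.
    by move/eqP.
  - by left.
have [v3 v3nz [h3 h4]] := @gt_cap _ _ _ _ (hproj o3) (hproj o4) h34.
case=> [->|[m hm ->]]; first exact: (B2 v3 v3nz h3 h4).
move/eigenvalueP: (hm) => [t ht tnz].
case: (eqVneq m 0) => [m0|mnz].
  by rewrite m0 mulr0 subr0; exact: (B2 v3 v3nz h3 h4).
case: (eqVneq (alpha / (alpha - 1) - (alpha - 1)^-1 * m) 0) => [l0|lnz]; last first.
  exact: (B3 t m tnz ht mnz lnz).
rewrite l0.
have ma : m = alpha.
  have : alpha - m = (alpha - 1) * (alpha / (alpha - 1) - (alpha - 1)^-1 * m).
    by field; rewrite ha1.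
  by rewrite l0 mulr0 => /eqP; rewrite subr_eq0 => /eqP ->.
have e : t *m (P o1 + P o2) = 0 by rewrite mulmxDr sum12 ht ma subrr.
have [v vnz [h1 h2]] :=
  @zero_sum_cap _ _ _ _ (hproj o1) (hproj o2) (esym h12) t tnz e.
exact: (B1 v vnz h1 h2).
Qed.
End S.

Section T.
Variable C : numClosedFieldType.
Variable n : nat.

Lemma Trep_proj (P : 'M[C]_n) : is_proj P -> is_proj (1%:M - P).
Proof.
case=> h1 h2; split.
  by rewrite mulmxBl mul1mx mulmxBr mulmx1 h1 subrr subr0.
move: h2; rewrite /adjmx map_mxB map_mx1 linearB /= trmx1 => ->.
by [].
Qed.

Lemma rank_compl (P : 'M[C]_n) : P *m P = P -> \rank (1%:M - P) = (n - \rank P)%N.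
Proof.
move=> h; rewrite -mxrank_ker; apply/eqP; rewrite eqn_leq; apply/andP; split.
  by apply: mxrankS; apply/sub_kermxP; rewrite mulmxBl mul1mx h subrr.
apply: mxrankS; rewrite -[X in (X <= _)%MS](_ : kermx P *m (1%:M - P) = kermx P).
  exact: submxMl.
by rewrite mulmxBr mulmx1 mulmx_ker subr0.
Qed.

Lemma lambdaT (P : 'I_4 -> 'M[C]_n) l :
  Lambda (Trep P) l <-> exists2 m, Lambda P m & l = 2 - m.
Proof.
have hM : Trep P o3 + Trep P o4 = (2 : C)%:M - (P o3 + P o4).
  apply/matrixP => i j; rewrite /Trep !mxE.
  by case: (i == j); rewrite /= ?mulr1n ?mulr0n; ring.
rewrite /Lambda hM; split.
  move/eigenvalueP => [v hv vnz]; exists (2 - l); last by ring.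
  apply/eigenvalueP; exists v => //.
  move: hv; rewrite mulmxBr mul_mx_scalar => hv.
  by rewrite scalerBl -hv opprB addrCA subrr addr0.
case=> m /eigenvalueP [v hv vnz] ->; apply/eigenvalueP; exists v => //.
by rewrite mulmxBr mul_mx_scalar hv scalerBl.
Qed.
End T.

Theorem lemma4p3 (C : numClosedFieldType) (n : nat) (alpha : C)
    (P : 'I_4 -> 'M[C]_n) :
  is_rep alpha P ->
  (* (i) *)
  (forall l : C, Lambda (Trep P) l <->
     exists2 m : C, Lambda P m & l = 2 - m) /\
  (* (ii) *)
  (0 < alpha -> alpha != 1 ->
    ((n < \rank (P o1) + \rank (P o2))%N ->
     n = (\rank (P o3) + \rank (P o4))%N ->
     forall l : C, LambdaS alpha P l <->
       (l = 0 \/ exists2 m : C, Lambda P m &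
                   l = alpha / (alpha - 1) - (alpha - 1)^-1 * m)) /\
    ((n < \rank (P o3) + \rank (P o4))%N ->
     n = (\rank (P o1) + \rank (P o2))%N ->
     forall l : C, LambdaS alpha P l <->
       (l = alpha / (alpha - 1) \/ exists2 m : C, Lambda P m &
                   l = alpha / (alpha - 1) - (alpha - 1)^-1 * m))) /\
  (* (iii) *)
  (0 < alpha < 3 ->
    ((\rank (P o1) + \rank (P o2) < n)%N ->
     n = (\rank (P o3) + \rank (P o4))%N ->
     forall l : C, LambdaPhiPlus alpha P l <->
       (l = 0 \/ exists2 m : C, Lambda P m &
                   l = 1 - (3 - alpha)^-1 + (3 - alpha)^-1 * m)) /\
    ((\rank (P o3) + \rank (P o4) < n)%N ->
     n = (\rank (P o1) + \rank (P o2))%N ->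
     forall l : C, LambdaPhiPlus alpha P l <->
       (l = 1 + (3 - alpha)^-1 \/ exists2 m : C, Lambda P m &
                   l = 1 - (3 - alpha)^-1 + (3 - alpha)^-1 * m))).
Proof.
case=> _ [hproj hsum].
have hP i : P i *m P i = P i := (hproj i).1.
split; first exact: lambdaT.
split.
  move=> a0 a1.
  have ha0 : alpha != 0 by rewrite lt0r_neq0.
  have ha1 : alpha - 1 != 0 by rewrite subr_eq0.
  split; [exact: (@partA C n alpha P hP hsum ha0 ha1 hproj) | exact: (@partB C n alpha P hP hsum ha0 ha1 hproj)].
case/andP => a0 a3.
have h3pos : 0 < 3 - alpha by rewrite subr_gt0.
have h3 : 3 - alpha != 0 by rewrite lt0r_neq0.
have ha1' : 4 - alpha - 1 != 0.
  by have -> : 4 - alpha - 1 = 3 - alpha by ring.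
have ha0' : 4 - alpha != 0.
  have -> : 4 - alpha = 3 - alpha + 1 by ring.
  by rewrite lt0r_neq0 // addr_gt0 // ltr01.
have hTproj i : is_proj (Trep P i) := @Trep_proj C n _ (hproj i).
have hTP i : Trep P i *m Trep P i = Trep P i := (hTproj i).1.
have hTsum : \sum_i Trep P i = (4 - alpha)%:M.
  rewrite /Trep sumrB hsum sumr_const card_ord raddfB /=.
  by rewrite -[in RHS](mulr1n (1 : C)) -mulrnA raddfMn.
have rk i : \rank (Trep P i) = (n - \rank (P i))%N by rewrite rank_compl.
have rle i : (\rank (P i) <= n)%N by exact: rank_leq_col.
have := rle o1; have := rle o2; have := rle o3; have := rle o4.
move=> r4 r3 r2 r1.
split.
  move=> h12 h34 l.
  have h12' : (n < \rank (Trep P o1) + \rank (Trep P o2))%N by rewrite !rk; lia.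
  have h34' : n = (\rank (Trep P o3) + \rank (Trep P o4))%N by rewrite !rk; lia.
  apply: (iff_trans (@partA C n (4 - alpha) (Trep P) hTP hTsum ha0' ha1' hTproj h12' h34' l)).
  split.
    case=> [->|[m' /lambdaT [m hm ->] ->]]; [by left|right; exists m => //].
    by field; rewrite ?h3 ?ha1'.
  case=> [->|[m hm ->]]; [by left|right; exists (2 - m)].
    by apply/lambdaT; exists m.
  by field; rewrite ?h3 ?ha1'.
move=> h34 h12 l.
have h34' : (n < \rank (Trep P o3) + \rank (Trep P o4))%N by rewrite !rk; lia.
have h12' : n = (\rank (Trep P o1) + \rank (Trep P o2))%N by rewrite !rk; lia.
apply: (iff_trans (@partB C n (4 - alpha) (Trep P) hTP hTsum ha0' ha1' hTproj h34' h12' l)).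
have hc : (4 - alpha) / (4 - alpha - 1) = 1 + (3 - alpha)^-1.
  by field; rewrite ?h3 ?ha1'.
rewrite hc; split.
  case=> [->|[m' /lambdaT [m hm ->] ->]]; [by left|right; exists m => //].
  by field; rewrite ?h3 ?ha1'.
case=> [->|[m hm ->]]; [by left|right; exists (2 - m)].
  by apply/lambdaT; exists m.
by field; rewrite ?h3 ?ha1'.
Qed.
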